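(* Let $G$ be a nilpotent group of class $c$ and let $n=\lceil c/2\rceil$. Then the image of the natural homomorphism $\gamma_n(G)\otimes G\to G\otimes G$ (induced by inclusion) is abelian.
   Context: $\gamma_n(G)$ is the $n$-th term of the lower central series. Conventions: ${}^g h = ghg^{-1}$. For $N\trianglelefteq G$, $N\otimes G$ is generated by symbols $x\otimes g$ ($x\in N$, $g\in G$) subject to $xx'\otimes g=({}^x x'\otimes {}^x g)(x\otimes g)$ and $x\otimes gg'=(x\otimes g)({}^g x\otimes {}^g g')$; $G\otimes G$ is the case $N=G$. *)

(* Defs.v *)
From Stdlib Require Import List Arith.
Import ListNotations.

Record Grp := {
  carrier :> Type;
  gmul : carrier -> carrier -> carrier;
  gone : carrier;
  ginv : carrier -> carrier;
  gmulA : forall x y z, gmul x (gmul y z) = gmul (gmul x y) z;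
  gmul1l : forall x, gmul gone x = x;
  gmul1r : forall x, gmul x gone = x;
  gmulVl : forall x, gmul (ginv x) x = gone;
  gmulVr : forall x, gmul x (ginv x) = gone
}.

Section GroupDefs.
Variable G : Grp.

(* conjugation convention of the paper: ^g h = g h g^-1 *)
Definition gconj (g h : G) : G := gmul G (gmul G g h) (ginv G g).

Definition gcomm (x y : G) : G :=
  gmul G (gmul G (gmul G x y) (ginv G x)) (ginv G y).

Inductive gen (S : G -> Prop) : G -> Prop :=
| gen_one : gen S (gone G)
| gen_in : forall x, S x -> gen S x
| gen_inv : forall x, gen S x -> gen S (ginv G x)
| gen_mul : forall x y, gen S x -> gen S y -> gen S (gmul G x y).

(* lcs k = gamma_{k+1}(G):  gamma_1 = G, gamma_{i+1} = [gamma_i, G] *)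
Fixpoint lcs (k : nat) : G -> Prop :=
  match k with
  | 0 => fun _ => True
  | S k' => gen (fun z => exists x g, lcs k' x /\ z = gcomm x g)
  end.

(* gamma_n(G), with gamma_0 := G by convention (only relevant for c = 0) *)
Definition gamma (n : nat) : G -> Prop := lcs (n - 1).

Definition trivial_sub (H : G -> Prop) : Prop := forall x, H x -> x = gone G.

Definition nilpotent_class (c : nat) : Prop :=
  trivial_sub (lcs c) /\ (forall d, trivial_sub (lcs d) -> c <= d).

(* Words in the symbols x (x) g and their formal inverses:
   a letter (b, (x, g)) stands for (x (x) g) if b = false and
   (x (x) g)^-1 if b = true. *)
Definition letter := (bool * (G * G))%type.
Definition flip (a : letter) : letter := (negb (fst a), snd a).
Definition sym (x g : G) : letter := (false, (x, g)).

(* The congruence on words defining N (x) G (N a normal subgroup given by a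
   predicate): group axioms (free cancellation) together with the defining
   relations
     x x' (x) g = (^x x' (x) ^x g)(x (x) g),
     x (x) g g' = (x (x) g)(^g x (x) ^g g').                              *)
Inductive tcong (N : G -> Prop) : list letter -> list letter -> Prop :=
| tc_refl : forall w, tcong N w w
| tc_sym : forall u v, tcong N u v -> tcong N v u
| tc_trans : forall u v w, tcong N u v -> tcong N v w -> tcong N u w
| tc_cat : forall u u' v v', tcong N u u' -> tcong N v v' ->
                             tcong N (u ++ v) (u' ++ v')
| tc_cancel : forall a, tcong N [a; flip a] []
| tc_rel1 : forall x x' g, N x -> N x' ->
    tcong N [sym (gmul G x x') g] [sym (gconj x x') (gconj x g); sym x g]
| tc_rel2 : forall x g g', N x ->
    tcong N [sym x (gmul G g g')] [sym x g; sym (gconj g x) (gconj g g')].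

(* words representing elements of N (x) G *)
Definition Nword (N : G -> Prop) (w : list letter) : Prop :=
  Forall (fun a => N (fst (snd a))) w.

(* G (x) G: words modulo tcong (fun _ => True) *)
Definition tsq_eq : list letter -> list letter -> Prop := tcong (fun _ => True).

(* The natural homomorphism N (x) G -> G (x) G induced by inclusion sends the
   class of an N-word w to the class of w in G (x) G.  A word u represents an
   element of its image iff it is tsq_eq-equivalent to some N-word. *)
Definition in_tensor_image (N : G -> Prop) (u : list letter) : Prop :=
  exists w, Nword N w /\ tsq_eq u w.

Definition tensor_image_abelian (N : G -> Prop) : Prop :=
  forall u v, in_tensor_image N u -> in_tensor_image N v ->
    tsq_eq (u ++ v) (v ++ u).

End GroupDefs.

(* Main.v *)
Require Import Defs.
From Stdlib Require Import List Arith Lia Setoid Morphisms.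
Import ListNotations.

Section S.
Variable G : Grp.
Local Infix "**" := (gmul G) (at level 40, left associativity).
Local Notation one := (gone G).
Local Notation inv := (ginv G).

Lemma inv_uniq (x y : G) : x ** y = one -> inv x = y.
Proof. intro H. rewrite <- (gmul1r G (inv x)), <- H, gmulA, gmulVl, gmul1l. reflexivity. Qed.
Lemma inv_mul (x y : G) : inv (x ** y) = inv y ** inv x.
Proof. apply inv_uniq. rewrite <- gmulA, (gmulA G y), gmulVr, gmul1l, gmulVr. reflexivity. Qed.
Lemma inv_inv (x : G) : inv (inv x) = x.
Proof. apply inv_uniq. apply gmulVl. Qed.
Lemma inv_one : inv one = one.
Proof. apply inv_uniq. apply gmul1l. Qed.
Lemma mulKV (x y : G) : inv x ** (x ** y) = y.
Proof. rewrite gmulA, gmulVl, gmul1l. reflexivity. Qed.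
Lemma mulVK (x y : G) : x ** (inv x ** y) = y.
Proof. rewrite gmulA, gmulVr, gmul1l. reflexivity. Qed.

Ltac gsimpl := unfold gconj, gcomm; repeat first [rewrite <- gmulA | rewrite inv_mul | rewrite inv_inv
  | rewrite inv_one | rewrite gmul1l | rewrite gmul1r | rewrite gmulVl | rewrite gmulVr
  | rewrite mulKV | rewrite mulVK].

Lemma hall_witt (y g z : G) :
  gcomm G (gcomm G y g) (gconj G g z) ** gcomm G (gcomm G g z) (gconj G z y)
   ** gcomm G (gcomm G z y) (gconj G y g) = one.
Proof. gsimpl. reflexivity. Qed.

Lemma lcs_one k : lcs G k one.
Proof. destruct k; simpl; [exact I | apply gen_one]. Qed.
Lemma lcs_inv k x : lcs G k x -> lcs G k (inv x).
Proof. destruct k; simpl; [auto | apply gen_inv]. Qed.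
Lemma lcs_mul k x y : lcs G k x -> lcs G k y -> lcs G k (x ** y).
Proof. destruct k; simpl; [auto | apply gen_mul]. Qed.
Lemma lcs_commG k x g : lcs G k x -> lcs G (S k) (gcomm G x g).
Proof. intro H. simpl. apply gen_in. exists x, g. auto. Qed.
Lemma lcs_commG' k x g : lcs G k x -> lcs G (S k) (gcomm G g x).
Proof. intro H. replace (gcomm G g x) with (inv (gcomm G x g)).
  apply lcs_inv, lcs_commG, H. gsimpl. reflexivity. Qed.

Lemma lcs_conj k g z : lcs G k z -> lcs G k (gconj G g z).
Proof.
  revert g z. induction k as [|k IH]; intros g z H; [exact I|].
  simpl in *. induction H as [|z [x [h [Hx ->]]]|z _ IHz|z1 z2 _ IH1 _ IH2].
  - replace (gconj G g one) with one by (gsimpl; reflexivity). apply gen_one.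
  - apply gen_in. exists (gconj G g x), (gconj G g h). split; [apply IH; exact Hx|].
    gsimpl. reflexivity.
  - replace (gconj G g (inv z)) with (inv (gconj G g z)) by (gsimpl; reflexivity).
    apply gen_inv; auto.
  - replace (gconj G g (z1 ** z2)) with (gconj G g z1 ** gconj G g z2) by (gsimpl; reflexivity).
    apply gen_mul; auto.
Qed.

Lemma lcs_S_sub k z : lcs G (S k) z -> lcs G k z.
Proof.
  simpl. induction 1 as [|z [x [h [Hx ->]]]|z _ IHz|z1 z2 _ IH1 _ IH2].
  - apply lcs_one.
  - replace (gcomm G x h) with (x ** gconj G h (inv x)) by (gsimpl; reflexivity).
    apply lcs_mul; [exact Hx|]. apply lcs_conj, lcs_inv, Hx.
  - apply lcs_inv; auto.
  - apply lcs_mul; auto.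
Qed.

Lemma lcs_mono a b z : b <= a -> lcs G a z -> lcs G b z.
Proof. induction 1; auto. intro Hz. apply IHle, lcs_S_sub, Hz. Qed.

Lemma lcs_eq a b z : a = b -> lcs G a z -> lcs G b z.
Proof. intros ->; auto. Qed.

Lemma lcs_comm j : forall i a b, lcs G i a -> lcs G j b -> lcs G (i + j + 1) (gcomm G a b).
Proof.
  induction j as [|j IHj]; intros i a b Ha Hb.
  - apply (lcs_eq (S i)); [lia|]. apply lcs_commG, Ha.
  - simpl in Hb. induction Hb as [|z [y [g [Hy ->]]]|z _ IHz|z1 z2 _ IH1 _ IH2].
    + replace (gcomm G a one) with one by (gsimpl; reflexivity). apply lcs_one.
    + set (w := gconj G (inv g) a).
      assert (Hw : lcs G i w) by (apply lcs_conj, Ha).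
      assert (E1 : gcomm G a (gcomm G y g) =
        gcomm G (gcomm G g w) (gconj G w y) ** gcomm G (gcomm G w y) (gconj G y g)).
      { pose proof (hall_witt y g w) as HW.
        replace (gconj G g w) with a in HW by (unfold w; gsimpl; reflexivity).
        replace (gcomm G a (gcomm G y g)) with (inv (gcomm G (gcomm G y g) a)) by (gsimpl; reflexivity).
        rewrite <- gmulA in HW. apply inv_uniq in HW. rewrite HW. reflexivity. }
      rewrite E1. apply lcs_mul.
      * apply (lcs_eq (S i + j + 1)); [lia|]. apply IHj; [apply lcs_commG', Hw | apply lcs_conj, Hy].
      * apply (lcs_eq (S (i + j + 1))); [lia|]. apply lcs_commG, IHj; auto.
    + replace (gcomm G a (inv z)) with (gconj G (inv z) (inv (gcomm G a z))) by (gsimpl; reflexivity).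
      apply lcs_conj, lcs_inv, IHz.
    + replace (gcomm G a (z1 ** z2)) with (gcomm G a z1 ** gconj G z1 (gcomm G a z2)) by (gsimpl; reflexivity).
      apply lcs_mul; [|apply lcs_conj]; auto.
Qed.

Lemma conj_comm (a b : G) : gconj G a b = gcomm G a b ** b.
Proof. gsimpl. reflexivity. Qed.
Lemma conj_triv (a b : G) : gcomm G a b = one -> gconj G a b = b.
Proof. intro H. rewrite conj_comm, H, gmul1l. reflexivity. Qed.

Local Notation TE := (tsq_eq G).
Local Notation P := (sym G).
Local Notation fl := (flip G).

Lemma TE_refl u : TE u u. Proof. apply tc_refl. Qed.
Lemma TE_sym u v : TE u v -> TE v u. Proof. apply tc_sym. Qed.
Lemma TE_trans u v w : TE u v -> TE v w -> TE u w. Proof. apply tc_trans. Qed.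
Instance TE_equiv : Equivalence TE.
Proof. split; [exact TE_refl | exact TE_sym | exact TE_trans]. Qed.
Instance TE_app : Proper (TE ==> TE ==> TE) (@app (letter G)).
Proof. intros u u' Hu v v' Hv. apply tc_cat; auto. Qed.
Instance TE_cons : Proper (eq ==> TE ==> TE) (@cons (letter G)).
Proof. intros a b -> v v' Hv. apply (tc_cat _ _ [b] [b] v v'); [reflexivity | exact Hv]. Qed.

Lemma flip_flip a : fl (fl a) = a.
Proof. destruct a as [b p]. unfold flip. simpl. rewrite Bool.negb_involutive. reflexivity. Qed.

Lemma cancel1 a : TE [a; fl a] [].
Proof. apply tc_cancel. Qed.
Lemma cancel2 a : TE [fl a; a] [].
Proof. rewrite <- (flip_flip a) at 2. apply tc_cancel. Qed.
Lemma cancel_mid u a v : TE (u ++ a :: fl a :: v) (u ++ v).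
Proof. change (a :: fl a :: v) with ([a; fl a] ++ v). rewrite cancel1. reflexivity. Qed.
Lemma cancel_mid' u a v : TE (u ++ fl a :: a :: v) (u ++ v).
Proof. change (fl a :: a :: v) with ([fl a; a] ++ v). rewrite cancel2. reflexivity. Qed.

Lemma lcancel a u v : TE (a :: u) (a :: v) -> TE u v.
Proof. intro H. rewrite <- (cancel_mid' [] a u), <- (cancel_mid' [] a v). simpl.
  rewrite H. reflexivity. Qed.
Lemma rcancel a u v : TE (u ++ [a]) (v ++ [a]) -> TE u v.
Proof. intro H. rewrite <- (app_nil_r u), <- (app_nil_r v).
  rewrite <- (cancel_mid u a []), <- (cancel_mid v a []).
  change (a :: fl a :: []) with ([a] ++ [fl a]). rewrite !app_assoc, H. reflexivity. Qed.

Lemma TE_flip a b : TE [a] [b] -> TE [fl a] [fl b].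
Proof. intro H. apply (lcancel a). rewrite cancel1. change [a; fl b] with ([a] ++ [fl b]). rewrite H. symmetry. apply cancel1. Qed.

Lemma R1 x x' g u y z : u = x ** x' -> y = gconj G x x' -> z = gconj G x g ->
  TE [P u g] [P y z; P x g].
Proof. intros -> -> ->. apply tc_rel1; exact I. Qed.
Lemma R2 x g g' v y z : v = g ** g' -> y = gconj G g x -> z = gconj G g g' ->
  TE [P x v] [P x g; P y z].
Proof. intros -> -> ->. apply tc_rel2; exact I. Qed.

Lemma idem s : TE [s] [s; s] -> TE [s] [].
Proof. intro H. apply (rcancel s). simpl. symmetry. exact H. Qed.

Lemma one_l v : TE [P one v] [].
Proof. apply idem. apply (R1 one one); gsimpl; reflexivity. Qed.
Lemma one_r x : TE [P x one] [].
Proof. apply idem. apply (R2 x one one); gsimpl; reflexivity. Qed.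

Lemma inv_l x v : TE [P (inv x) v] [fl (P (gconj G (inv x) x) (gconj G (inv x) v))].
Proof.
  apply (lcancel (P (gconj G (inv x) x) (gconj G (inv x) v))). rewrite cancel1.
  transitivity [P one v]; [|apply one_l]. symmetry. apply (R1 (inv x) x); gsimpl; reflexivity.
Qed.

Lemma CM x g a b : TE [P x g; P (gconj G (g ** x) a) (gconj G (g ** x) b)]
   [P (gconj G (x ** g) a) (gconj G (x ** g) b); P x g].
Proof.
  set (A := P (gconj G x a) (gconj G x g)).
  set (Q := P (gconj G g x) (gconj G g b)).
  assert (W1 : TE [P (x ** a) (g ** b)]
     [A; P (gconj G (x ** g) a) (gconj G (x ** g) b); P x g; Q]).
  { rewrite (R1 x a (g ** b) (x ** a) (gconj G x a) (gconj G x (g ** b))) by reflexivity.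
    change [P (gconj G x a) (gconj G x (g ** b)); P x (g ** b)] with
      ([P (gconj G x a) (gconj G x (g ** b))] ++ [P x (g ** b)]).
    rewrite (R2 (gconj G x a) (gconj G x g) (gconj G x b) _ (gconj G (x ** g) a) (gconj G (x ** g) b))
      by (gsimpl; reflexivity).
    rewrite (R2 x g b (g ** b) (gconj G g x) (gconj G g b)) by reflexivity.
    reflexivity. }
  assert (W2 : TE [P (x ** a) (g ** b)]
     [A; P x g; P (gconj G (g ** x) a) (gconj G (g ** x) b); Q]).
  { rewrite (R2 (x ** a) g b (g ** b) (gconj G g (x ** a)) (gconj G g b)) by reflexivity.
    change [P (x ** a) g; P (gconj G g (x ** a)) (gconj G g b)] with
      ([P (x ** a) g] ++ [P (gconj G g (x ** a)) (gconj G g b)]).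
    rewrite (R1 x a g (x ** a) (gconj G x a) (gconj G x g)) by reflexivity.
    rewrite (R1 (gconj G g x) (gconj G g a) (gconj G g b) _ (gconj G (g ** x) a) (gconj G (g ** x) b))
      by (gsimpl; reflexivity).
    reflexivity. }
  rewrite W1 in W2. apply lcancel in W2.
  apply (rcancel Q). symmetry. exact W2.
Qed.

Lemma CMy x g y h : TE [P x g; P y h]
   [P (gconj G (gcomm G x g) y) (gconj G (gcomm G x g) h); P x g].
Proof.
  pose proof (CM x g (gconj G (inv (g ** x)) y) (gconj G (inv (g ** x)) h)) as H.
  replace (gconj G (g ** x) (gconj G (inv (g ** x)) y)) with y in H by (gsimpl; reflexivity).
  replace (gconj G (g ** x) (gconj G (inv (g ** x)) h)) with h in H by (gsimpl; reflexivity).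
  replace (gconj G (x ** g) (gconj G (inv (g ** x)) y)) with (gconj G (gcomm G x g) y) in H
    by (gsimpl; reflexivity).
  replace (gconj G (x ** g) (gconj G (inv (g ** x)) h)) with (gconj G (gcomm G x g) h) in H
    by (gsimpl; reflexivity).
  exact H.
Qed.

Lemma I1 x g v : TE [P (gcomm G x g) v] [P x g; fl (P (gconj G v x) (gconj G v g))].
Proof.
  set (k := gcomm G x g). set (t := P x g). set (s := P (gconj G g x) v).
  set (s' := P (gconj G k (gconj G g x)) (gconj G k v)).
  set (w := P (gconj G v x) (gconj G v g)).
  assert (A : TE [P k v] [P (gconj G x (gconj G g (inv x))) (gconj G x v); P x v]).
  { apply (R1 x (gconj G g (inv x))); unfold k; gsimpl; reflexivity. }
  assert (B : TE [P (gconj G x (gconj G g (inv x))) (gconj G x v)] [fl s']).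
  { replace (gconj G x (gconj G g (inv x))) with (inv (gconj G x (gconj G g x))) by (gsimpl; reflexivity).
    rewrite inv_l. unfold s', k.
    replace (gconj G (inv (gconj G x (gconj G g x))) (gconj G x (gconj G g x)))
      with (gconj G (gcomm G x g) (gconj G g x)) by (gsimpl; reflexivity).
    replace (gconj G (inv (gconj G x (gconj G g x))) (gconj G x v))
      with (gconj G (gcomm G x g) v) by (gsimpl; reflexivity).
    reflexivity. }
  assert (C0 : TE [t; s] [s'; t]) by apply CMy.
  assert (C : TE [fl s'] [t; fl s; fl t]).
  { symmetry. transitivity [fl s'; s'; t; fl s; fl t]. { symmetry. exact (cancel_mid' [] s' [t; fl s; fl t]). }
    transitivity ([fl s'] ++ [s'; t] ++ [fl s; fl t]). { reflexivity. }
    rewrite <- C0. simpl.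
    transitivity [fl s'; t; fl t]. { exact (cancel_mid [fl s'; t] s [fl t]). }
    exact (cancel_mid [fl s'] t []). }
  assert (D : TE [P x v; w] [t; s]).
  { transitivity [P x (v ** g)].
    - symmetry. apply (R2 x v g); reflexivity.
    - apply (R2 x g (gconj G (inv g) v)); gsimpl; reflexivity. }
  rewrite A. change [P (gconj G x (gconj G g (inv x))) (gconj G x v); P x v] with
     ([P (gconj G x (gconj G g (inv x))) (gconj G x v)] ++ [P x v]).
  rewrite B. change ([fl s'] ++ [P x v]) with ([fl s'] ++ [P x v]). rewrite C. simpl.
  apply TE_cons; [reflexivity|].
  transitivity [fl s; fl t; P x v; w; fl w]. { symmetry. exact (cancel_mid [fl s; fl t; P x v] w []). }
  transitivity ([fl s; fl t] ++ [P x v; w] ++ [fl w]). { reflexivity. }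
  rewrite D. simpl.
  transitivity [fl s; s; fl w]. { exact (cancel_mid' [fl s] t [s; fl w]). }
  exact (cancel_mid' [] s [fl w]).
Qed.

Lemma flip_nil a : TE [a] [] -> TE [fl a] [].
Proof. intro H. apply (lcancel a). rewrite cancel1. symmetry. exact H. Qed.

Definition lcomm a b := TE [a; b] [b; a].
Lemma lcomm_sym a b : lcomm a b -> lcomm b a.
Proof. unfold lcomm. intro; symmetry; auto. Qed.
Lemma lcomm_fl a b : lcomm a b -> lcomm (fl a) b.
Proof.
  unfold lcomm. intro H.
  transitivity [fl a; b; a; fl a]. { symmetry. exact (cancel_mid [fl a; b] a []). }
  transitivity ([fl a] ++ [b; a] ++ [fl a]). { reflexivity. }
  rewrite <- H. exact (cancel_mid' [] a [b; fl a]).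
Qed.
Lemma lcomm_word a w : Forall (lcomm a) w -> TE (a :: w) (w ++ [a]).
Proof.
  induction 1 as [|b w Hab _ IH]; [reflexivity|].
  unfold lcomm in Hab. transitivity ([a; b] ++ w); [reflexivity|]. rewrite Hab. simpl. rewrite IH. reflexivity.
Qed.
Lemma lcomm_words w1 w2 : (forall a b, In a w1 -> In b w2 -> lcomm a b) -> TE (w1 ++ w2) (w2 ++ w1).
Proof.
  induction w1 as [|a w1 IH]; intro H.
  - rewrite app_nil_r. reflexivity.
  - simpl. rewrite IH by (intros; apply H; simpl; auto).
    transitivity ((a :: w2) ++ w1); [reflexivity|]. rewrite lcomm_word.
    + rewrite <- app_assoc. reflexivity.
    + apply Forall_forall. intros b Hb. apply H; simpl; auto.
Qed.

Variable c : nat.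
Hypothesis Hc : trivial_sub G (lcs G c).

Lemma triv p z : c <= p -> lcs G p z -> z = one.
Proof. intros Hp Hz. apply Hc. apply (lcs_mono p); auto. Qed.
Lemma comm_one i j a b : c <= i + j + 1 -> lcs G i a -> lcs G j b -> gconj G a b = b.
Proof. intros Hij Ha Hb. apply conj_triv. apply (triv (i + j + 1)); auto. apply lcs_comm; auto. Qed.

Definition Phi q :=
  (forall p u v, c <= p + q -> lcs G p u -> lcs G q v -> TE [P u v] []) /\
  (forall a x v g, c <= a + q + 1 -> lcs G a x -> lcs G q v -> TE [P x (gconj G v g)] [P x g]).

Lemma Phi_base q : c <= q -> Phi q.
Proof.
  intro Hq. split.
  - intros p u v _ _ Hv. rewrite (triv q v Hq Hv). apply one_r.
  - intros a x v g _ _ Hv. rewrite (triv q v Hq Hv).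
    replace (gconj G one g) with g by (gsimpl; reflexivity). reflexivity.
Qed.

Lemma Phi_step q : q < c -> Phi (S q) -> Phi q.
Proof.
  intros Hq [F1 H1].
  assert (H0 : forall a x v g, c <= a + q + 1 -> lcs G a x -> lcs G q v -> TE [P x (gconj G v g)] [P x g]).
  { intros a x v g Ha Hx Hv. rewrite conj_comm.
    rewrite (R2 x (gcomm G v g) g _ (gconj G (gcomm G v g) x) (gconj G (gcomm G v g) g)) by reflexivity.
    assert (Hvg : lcs G (S q) (gcomm G v g)) by (apply lcs_commG, Hv).
    rewrite (comm_one (S q) a (gcomm G v g) x) by (auto; lia).
    change [P x (gcomm G v g); P x (gconj G (gcomm G v g) g)] with
      ([P x (gcomm G v g)] ++ [P x (gconj G (gcomm G v g) g)]).
    rewrite (F1 a x (gcomm G v g)) by (auto; lia). simpl.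
    apply (H1 a); auto; lia. }
  split; [|exact H0].
  intros p u v Hp Hu Hv. destruct p as [|p]; [lia|].
  assert (Hw : forall w, TE [P (gconj G w u) v] []).
  { simpl in Hu. induction Hu as [|z [x [h [Hx ->]]]|z Hz IHz|z1 z2 Hz1 IH1 Hz2 IH2]; intro w.
    - replace (gconj G w one) with one by (gsimpl; reflexivity). apply one_l.
    - replace (gconj G w (gcomm G x h)) with (gcomm G (gconj G w x) (gconj G w h)) by (gsimpl; reflexivity).
      assert (Hx' : lcs G p (gconj G w x)) by (apply lcs_conj, Hx).
      rewrite I1. rewrite (comm_one q p v (gconj G w x)) by (auto; lia).
      rewrite (TE_flip _ _ (H0 p (gconj G w x) v (gconj G w h) ltac:(lia) Hx' Hv)).
      apply cancel1.
    - replace (gconj G w (inv z)) with (inv (gconj G w z)) by (gsimpl; reflexivity).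
      rewrite inv_l.
      assert (HX : lcs G (S p) (inv (gconj G w z))) by (apply lcs_inv, lcs_conj, Hz).
      rewrite (comm_one (S p) q _ v) by (auto; lia).
      replace (gconj G (inv (gconj G w z)) (gconj G w z)) with (gconj G w z) by (gsimpl; reflexivity).
      apply flip_nil, IHz.
    - replace (gconj G w (z1 ** z2)) with (gconj G w z1 ** gconj G w z2) by (gsimpl; reflexivity).
      assert (HU : lcs G (S p) (gconj G w z1)) by (apply lcs_conj, Hz1).
      rewrite (R1 (gconj G w z1) (gconj G w z2) v _ (gconj G (gconj G w z1 ** w) z2) v).
      + change [P (gconj G (gconj G w z1 ** w) z2) v; P (gconj G w z1) v] with
          ([P (gconj G (gconj G w z1 ** w) z2) v] ++ [P (gconj G w z1) v]).
        rewrite IH1, IH2. reflexivity.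
      + reflexivity.
      + gsimpl; reflexivity.
      + symmetry. apply (comm_one (S p) q); auto; lia. }
  specialize (Hw one). replace (gconj G one u) with u in Hw by (gsimpl; reflexivity). exact Hw.
Qed.

Lemma Phi_all n : forall q, c <= q + n -> Phi q.
Proof.
  induction n as [|n IH]; intros q Hq.
  - apply Phi_base. lia.
  - destruct (Nat.le_gt_cases c q). + apply Phi_base; auto.
    + apply Phi_step; auto. apply IH. lia.
Qed.

Lemma main_abelian : tensor_image_abelian G (gamma G ((c + 1) / 2)).
Proof.
  set (m := (c + 1) / 2 - 1).
  assert (Hm : c <= m + m + 2).
  { unfold m. pose proof (Nat.div_mod (c + 1) 2 ltac:(lia)) as Hd.
    pose proof (Nat.mod_upper_bound (c + 1) 2 ltac:(lia)). lia. }
  assert (Hpos : forall x g y h, lcs G m x -> lcs G m y -> lcomm (P x g) (P y h)).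
  { intros x g y h Hx Hy. unfold lcomm. rewrite CMy.
    assert (Hk : lcs G (S m) (gcomm G x g)) by (apply lcs_commG, Hx).
    rewrite (comm_one (S m) m _ y) by (auto; lia).
    destruct (Phi_all c (S m) ltac:(lia)) as [_ H'].
    change [P y (gconj G (gcomm G x g) h); P x g] with ([P y (gconj G (gcomm G x g) h)] ++ [P x g]).
    rewrite (H' m y (gcomm G x g) h) by (auto; lia). reflexivity. }
  assert (Hl : forall a b, lcs G m (fst (snd a)) -> lcs G m (fst (snd b)) -> lcomm a b).
  { intros [ba [x g]] [bb [y h]] Ha Hb. simpl in Ha, Hb.
    assert (E1 : forall bx (x0 g0 : G), (bx, (x0, g0)) = P x0 g0 \/ (bx, (x0, g0)) = fl (P x0 g0)).
    { intros [|] x0 g0; [right|left]; reflexivity. }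
    destruct (E1 ba x g) as [-> | ->]; destruct (E1 bb y h) as [-> | ->].
    - auto.
    - apply lcomm_sym, lcomm_fl, lcomm_sym. auto.
    - apply lcomm_fl. auto.
    - apply lcomm_fl, lcomm_sym, lcomm_fl, lcomm_sym. auto. }
  intros u v [w1 [Hw1 Hu]] [w2 [Hw2 Hv]].
  unfold tsq_eq in *. change (TE (u ++ v) (v ++ u)).
  rewrite Hu, Hv. apply lcomm_words. intros a b Ha Hb.
  apply Hl.
  - exact (proj1 (Forall_forall _ _) Hw1 a Ha).
  - exact (proj1 (Forall_forall _ _) Hw2 b Hb).
Qed.
End S.

Theorem lemma5p1 (G : Grp) (c : nat) :
  nilpotent_class G c ->
  tensor_image_abelian G (gamma G ((c + 1) / 2)).
Proof. intros [H _]. apply main_abelian. exact H. Qed.
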